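(* Let $\boldsymbol{\sigma}=(\sigma_n\colon\mathcal{A}_{n+1}^+\to\mathcal{A}_n^+)_{n\in\mathbb{N}}$ and $\boldsymbol{\tau}=(\tau_n\colon\mathcal{B}_{n+1}^+\to\mathcal{B}_n^+)_{n\in\mathbb{N}}$ be everywhere growing and proper directive sequences and let $\boldsymbol{\phi}=(\phi_n)_{n\in\mathbb{N}}\colon\boldsymbol{\sigma}\to\boldsymbol{\tau}$ be a letter-onto factor. Then $X_{\boldsymbol{\tau}}=\bigcup_{k\in\mathbb{Z}}T^k\phi_0(X^{(1)}_{\boldsymbol{\sigma}})$ and $X^{(n)}_{\boldsymbol{\tau}}=\bigcup_{k\in\mathbb{Z}}T^k\phi_n(X^{(n)}_{\boldsymbol{\sigma}})$ for every $n\ge1$.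
   Context: An alphabet is a finite set; $\mathcal{A}^+$ is the set of nonempty finite words. A morphism $\sigma\colon\mathcal{A}^+\to\mathcal{B}^+$ is a semigroup homomorphism, extended to $\mathcal{A}^{\mathbb{Z}}\to\mathcal{B}^{\mathbb{Z}}$ by concatenation, $\sigma(x)=\cdots\sigma(x_{-1}).\sigma(x_0)\sigma(x_1)\cdots$ with $\sigma(x_0)$ starting at coordinate $0$; $T$ is the shift. $\sigma$ is proper if there are letters $u,v$ such that every $\sigma(a)$ starts with $u$ and ends with $v$; letter-onto if every $b\in\mathcal{B}$ occurs in some $\sigma(a)$. For a directive sequence $\boldsymbol{\sigma}=(\sigma_n\colon\mathcal{A}_{n+1}^+\to\mathcal{A}_n^+)$, $\sigma_{[n,N)}=\sigma_n\circ\cdots\circ\sigma_{N-1}$, its $n$th level is $X^{(n)}_{\boldsymbol{\sigma}}=\{x\in\mathcal{A}_n^{\mathbb{Z}}:\forall\ell,\ x_{[-\ell,\ell]}$ occurs in $\sigma_{[n,N)}(a)$ for some $N>n,a\in\mathcal{A}_N\}$, and $X_{\boldsymbol{\sigma}}=X^{(0)}_{\boldsymbol{\sigma}}$. It is everywhere growing if $\min_{a\in\mathcal{A}_N}|\sigma_{[0,N)}(a)|\to\infty$; proper if each $\sigma_n$ is proper. A factor $\boldsymbol{\phi}\colon\boldsymbol{\sigma}\to\boldsymbol{\tau}$ is a sequence of morphisms $\phi_0\colon\mathcal{A}_1^+\to\mathcal{B}_0^+$, $\phi_n\colon\mathcal{A}_n^+\to\mathcal{B}_n^+$ ($n\ge1$)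 with $\phi_0=\tau_0\phi_1$ and $\phi_n\sigma_n=\tau_n\phi_{n+1}$ for $n\ge1$; it is letter-onto if each $\phi_n$ is. *)

(* Defs.v *)
From mathcomp Require Import all_boot all_order all_algebra.
Set Implicit Arguments. Unset Strict Implicit. Unset Printing Implicit Defensive.
Import GRing.Theory Num.Theory.

(* A morphism A^+ -> B^+ is given by its (nonempty) letter images. *)
Definition nonerasing (A B : Type) (s : A -> seq B) : Prop :=
  forall a, s a <> [::].

Definition wimg (A B : Type) (s : A -> seq B) (w : seq A) : seq B :=
  flatten (map s w).

Definition biseq (A : Type) := int -> A.

(* Position in sigma(x) where sigma(x_k) starts; pos 0 = 0. *)
Definition pos (A B : Type) (s : A -> seq B) (x : biseq A) (k : int) : int :=
  match k with
  | Posz m => Posz (\sum_(i < m) size (s (x (Posz i))))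
  | Negz m => - Posz (\sum_(i < m.+1) size (s (x (- Posz i.+1)%R)))
  end.

(* y = s(x), with s(x_0) starting at coordinate 0 (well defined for a
   nonerasing s, since the blocks s(x_k) tile Z). *)
Definition is_image (A B : Type) (s : A -> seq B) (x : biseq A) (y : biseq B) : Prop :=
  forall (k : int) (j : nat) (c : B),
    onth (s (x k)) j = Some c -> y (pos s x k + Posz j)%R = c.

(* y belongs to  \bigcup_{k in Z} T^k s(X), where (T z)_i = z_{i+1}. *)
Definition shift_union_image (A B : Type) (s : A -> seq B) (X : biseq A -> Prop)
  (y : biseq B) : Prop :=
  exists (k : int) (x : biseq A) (z : biseq B),
    X x /\ is_image s x z /\ forall i : int, y i = z (i + k)%R.

Definition directive (A : nat -> finType) := forall n, A n.+1 -> seq (A n).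

(* sub sigma n k w = sigma_{[n, n+k)} (w), for w a word over A (k+n). *)
Unset Implicit Arguments.
Fixpoint sub (A : nat -> finType) (sigma : directive A) (n k : nat)
  : seq (A (Nat.add k n)) -> seq (A n) :=
  match k return seq (A (Nat.add k n)) -> seq (A n) with
  | 0 => fun w => w
  | k'.+1 => fun w => sub A sigma n k' (wimg (sigma (Nat.add k' n)) w)
  end.
Set Implicit Arguments.
Arguments sub {A} sigma n k w.

Definition window (A : Type) (x : biseq A) (l : nat) : seq A :=
  [seq x (Posz i - Posz l)%R | i <- iota 0 (2 * l).+1].

Definition level (A : nat -> finType) (sigma : directive A) (n : nat) (x : biseq (A n)) : Prop :=
  forall l : nat, exists (k : nat) (a : A (Nat.add k.+1 n)),
    infix (window x l) (sub sigma n k.+1 [:: a]).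

Definition morphisms_nonerasing (A : nat -> finType) (sigma : directive A) : Prop :=
  forall n, nonerasing (sigma n).

Definition everywhere_growing (A : nat -> finType) (sigma : directive A) : Prop :=
  forall M : nat, exists N0 : nat, forall N : nat, N0 <= N ->
    forall a : A (Nat.add N 0), M <= size (sub sigma 0 N [:: a]).

Definition proper_morphism (A B : Type) (s : A -> seq B) : Prop :=
  exists u v : B, forall a, ohead (s a) = Some u /\ ohead (rev (s a)) = Some v.

Definition proper_directive (A : nat -> finType) (sigma : directive A) : Prop :=
  forall n, proper_morphism (sigma n).

Definition letter_onto (A B : eqType) (s : A -> seq B) : Prop :=
  forall b : B, exists a : A, b \in s a.

(* A factor phi : sigma -> tau.  phi0 : A_1 -> B_0^+, and phi m represents
   phi_{m+1} : A_{m+1} -> B_{m+1}^+. *)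
Definition is_factor (A B : nat -> finType) (sigma : directive A) (tau : directive B)
  (phi0 : A 1 -> seq (B 0)) (phi : forall m, A m.+1 -> seq (B m.+1)) : Prop :=
  nonerasing phi0 /\ (forall m, nonerasing (phi m)) /\
  (forall a : A 1, phi0 a = wimg (tau 0) (phi 0 a)) /\
  (forall m (a : A m.+2), wimg (phi m) (sigma m.+1 a) = wimg (tau m.+1) (phi m.+1 a)).

Definition letter_onto_factor (A B : nat -> finType)
  (phi0 : A 1 -> seq (B 0)) (phi : forall m, A m.+1 -> seq (B m.+1)) : Prop :=
  letter_onto phi0 /\ forall m, letter_onto (phi m).

Arguments level {A} sigma n x.

(* Main.v *)
From Stdlib Require Import PeanoNat ClassicalEpsilon Classical.
Require Import Defs.
From mathcomp Require Import all_boot all_order all_algebra zify.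
Set Implicit Arguments. Unset Strict Implicit. Unset Printing Implicit Defensive.

Module MP1.

Section Words.
Variable T : eqType.

Lemma prefix_le (a c Q : seq T) : prefix a Q -> prefix c Q -> size a <= size c -> prefix a c.
Proof.
rewrite !prefixE => /eqP ea /eqP ec le.
by rewrite -{1}ec take_takel // ea.
Qed.

Lemma suffix_le (a c Q : seq T) : suffix a Q -> suffix c Q -> size a <= size c -> suffix a c.
Proof.
rewrite /suffix => h1 h2 le; apply: prefix_le h1 h2 _; by rewrite !size_rev.
Qed.

Lemma infix_cat3 (w s1 s2 : seq T) : infix w (s1 ++ s2) ->
  [\/ infix w s1, infix w s2 |
   exists a b, [/\ w = a ++ b, suffix a s1 & prefix b s2]].
Proof.
case/infixP=> P [S e].
have Hs1 : s1 = take (size s1) (P ++ w ++ S) by rewrite -e take_size_cat.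
have Hs2 : s2 = drop (size s1) (P ++ w ++ S) by rewrite -e drop_size_cat.
case: (leqP (size P + size w) (size s1)) => h1.
  apply: Or31; apply/infixP; exists P, (take (size s1 - (size P + size w)) S).
  rewrite {1}Hs1 take_cat; case: ifP => h; first by lia.
  rewrite take_cat; case: ifP => h'; first by lia.
  by rewrite subnDA.
case: (leqP (size s1) (size P)) => h2.
  apply: Or32; apply/infixP; exists (drop (size s1) P), S.
  rewrite Hs2 drop_cat; case: ifP => h //.
  have -> : size s1 = size P by lia.
  by rewrite subnn drop0 drop_size.
apply: Or33; exists (take (size s1 - size P) w), (drop (size s1 - size P) w).
split; first by rewrite cat_take_drop.
  apply/suffixP; exists P; rewrite {1}Hs1 take_cat; case: ifP => h; first by lia.
  rewrite take_cat; case: ifP => h' //; lia.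
apply/prefixP; exists S; rewrite {1}Hs2 drop_cat; case: ifP => h; first by lia.
rewrite drop_cat; case: ifP => h' //; lia.
Qed.

Lemma infix_blocks (w Pu Pv : seq T) (Qs : seq (seq T)) :
  infix w (flatten Qs) -> (forall Q, Q \in Qs -> prefix Pu Q /\ suffix Pv Q) ->
  size w <= size Pu -> size w <= size Pv ->
  (exists2 Q, Q \in Qs & infix w Q) \/ infix w (Pv ++ Pu).
Proof.
elim: Qs => [|Q Qs IH] /= hw hQ hu hv.
  by move: hw => /eqP ->; right; apply: infix0s.
case/infix_cat3: hw => [h|h|[a [b [ew sa pb]]]].
- by left; exists Q => //; rewrite inE eqxx.
- have hQs : forall Q1, Q1 \in Qs -> prefix Pu Q1 /\ suffix Pv Q1.
    by move=> Q1 h1; apply: hQ; rewrite inE h1 orbT.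
  case: (IH h hQs hu hv) => [[Q' hQ' hw']|]; last by right.
  by left; exists Q' => //; rewrite inE hQ' orbT.
- right; apply/infixP.
  have hs : size w = size a + size b by rewrite ew size_cat.
  have [pQ sQ] := hQ Q (mem_head _ _).
  have sa' : suffix a Pv by apply: suffix_le sa sQ _; lia.
  have pb' : prefix b Pu.
    case: Qs IH hQ pb => [|Q' Qs] _ hQ' /=.
      move=> pb; suff -> : b = [::] by apply: prefix0s.
      by case: b pb {ew hs sa}.
    move=> pb; have [pQ' _] := hQ' Q' ltac:(by rewrite !inE eqxx orbT).
    have pbQ' : prefix b Q'.
      move/prefixP: pb => [r er]; apply/prefixP.
      have /prefixP [r' er'] := pQ'.
      have hb : size b <= size Q' by rewrite er' size_cat; lia.
      exists (take (size Q' - size b) r).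
      by have := congr1 (take (size Q')) er; rewrite take_size_cat // take_cat ltnNge hb /=.
    apply: prefix_le pbQ' pQ' _; lia.
  move/suffixP: sa' => [x ->]; move/prefixP: pb' => [y ->].
  by exists x, y; rewrite ew !catA.
Qed.

End Words.

End MP1.
Import MP1.

Module MP2.

Section Wimg.
Lemma wimg_cat (X Y : Type) (f : X -> seq Y) u v : wimg f (u ++ v) = wimg f u ++ wimg f v.
Proof. by rewrite /wimg map_cat flatten_cat. Qed.
Lemma wimg_cons (X Y : Type) (f : X -> seq Y) a u : wimg f (a :: u) = f a ++ wimg f u.
Proof. by []. Qed.
Lemma wimg_nil (X Y : Type) (f : X -> seq Y) : wimg f [::] = [::].
Proof. by []. Qed.
Lemma wimg1 (X Y : Type) (f : X -> seq Y) a : wimg f [:: a] = f a.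
Proof. by rewrite /wimg /= cats0. Qed.
Lemma wimg_comp (X Y Z : Type) (f : Y -> seq Z) (g : X -> seq Y) u :
  wimg f (wimg g u) = wimg (fun a => wimg f (g a)) u.
Proof. by elim: u => [|a u IH] //=; rewrite !wimg_cons wimg_cat IH. Qed.
Lemma wimg_unit (X : Type) (u : seq X) : wimg (fun a => [:: a]) u = u.
Proof. by elim: u => [|a u IH] //=; rewrite wimg_cons IH. Qed.
Lemma wimg_ext (X Y : Type) (f g : X -> seq Y) u : (forall a, f a = g a) -> wimg f u = wimg g u.
Proof. by move=> e; rewrite /wimg (eq_map e). Qed.
Lemma size_wimg_le (X Y : Type) (f : X -> seq Y) K u :
  (forall a, size (f a) <= K) -> size (wimg f u) <= K * size u.
Proof.
move=> h; elim: u => [|a u IH] //=; rewrite wimg_cons size_cat mulnS.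
by apply: leq_add.
Qed.
Lemma size_wimg_ge (X Y : Type) (f : X -> seq Y) u :
  nonerasing f -> size u <= size (wimg f u).
Proof.
move=> h; elim: u => [|a u IH] //=; rewrite wimg_cons size_cat.
have : 0 < size (f a) by case: (f a) (h a).
lia.
Qed.
Lemma infix_wimg (X Y : eqType) (f : X -> seq Y) u v :
  infix u v -> infix (wimg f u) (wimg f v).
Proof.
case/infixP=> [s [s' ->]]; apply/infixP; exists (wimg f s), (wimg f s').
by rewrite !wimg_cat.
Qed.
Lemma mem_wimg_infix (X Y : eqType) (f : X -> seq Y) a u :
  a \in u -> infix (f a) (wimg f u).
Proof.
move=> /splitPr [s s']; apply/infixP; exists (wimg f s), (wimg f s').
by rewrite wimg_cat wimg_cons.
Qed.
End Wimg.

Section Down.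
Variable A : nat -> finType.
Unset Implicit Arguments.
Variable sigma : directive A.
Set Implicit Arguments.

Unset Implicit Arguments.
Fixpoint down (n N : nat) : seq (A N) -> seq (A n) :=
  match N as N0 return seq (A N0) -> seq (A n) with
  | 0 => fun u => match Nat.eq_dec 0 n with
                  | left e => eq_rect 0 (fun j => seq (A j)) u n e
                  | right _ => [::] end
  | N'.+1 => fun u => match Nat.eq_dec N'.+1 n with
                  | left e => eq_rect N'.+1 (fun j => seq (A j)) u n e
                  | right _ => down n N' (wimg (sigma N') u) end
  end.
Set Implicit Arguments.

Local Arguments Nat.eq_dec : simpl never.
Lemma cast_id m (e : m = m) (u : seq (A m)) : eq_rect m (fun j => seq (A j)) u m e = u.
Proof. by rewrite (eq_axiomK e). Qed.

Lemma down_id n u : down n n u = u.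
Proof.
case: n u => [|n] u /=.
  by case: (Nat.eq_dec 0 0) => [e|ne] //; rewrite cast_id.
by case: (Nat.eq_dec n.+1 n.+1) => [e|ne] //; rewrite cast_id.
Qed.

Lemma down_S n N u : n <= N -> down n N.+1 u = down n N (wimg (sigma N) u).
Proof.
move=> le /=; case: (Nat.eq_dec N.+1 n) => [e|ne] //; subst n; by rewrite ltnn in le.
Qed.

Lemma down_cat n N u v : n <= N -> down n N (u ++ v) = down n N u ++ down n N v.
Proof.
elim: N u v => [|N IH] u v le.
  have e : n = 0 by lia.
  by subst n; rewrite !down_id.
case: (eqVneq n N.+1) => [e|ne].
  by subst n; rewrite !down_id.
have le' : n <= N by lia.
by rewrite !down_S // wimg_cat IH.
Qed.

Lemma down_nil n N : n <= N -> down n N [::] = [::].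
Proof.
move=> le; have := down_cat [::] [::] le; rewrite cats0 => e.
by have := congr1 size e; rewrite size_cat; case: (down n N [::]) => //= ? ? ; lia.
Qed.

Lemma down_wimg n N (X : Type) (f : X -> seq (A N)) u : n <= N ->
  down n N (wimg f u) = wimg (fun a => down n N (f a)) u.
Proof.
move=> le; elim: u => [|a u IH]; first by rewrite wimg_nil down_nil.
by rewrite !wimg_cons down_cat // IH.
Qed.

Lemma down_flat n N u : n <= N -> down n N u = wimg (fun a => down n N [:: a]) u.
Proof. by move=> le; rewrite -{1}(wimg_unit u) down_wimg. Qed.

Lemma down_comp n m N u : n <= m -> m <= N -> down n m (down m N u) = down n N u.
Proof.
move=> nm; elim: N u => [|N IH] u mN.
  have e : m = 0 by lia.
  by subst m; rewrite down_id.
case: (eqVneq m N.+1) => [e|ne].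
  by subst m; rewrite down_id.
have le' : m <= N by lia.
by rewrite !down_S // ?IH //; lia.
Qed.

Lemma down_infix n N u v : n <= N -> infix u v -> infix (down n N u) (down n N v).
Proof.
move=> le /infixP [s [s' ->]]; apply/infixP; exists (down n N s), (down n N s').
by rewrite !down_cat.
Qed.

Lemma down_S1 N u : down N N.+1 u = wimg (sigma N) u.
Proof. by rewrite down_S // down_id. Qed.

Lemma sub_down n k u : sub sigma n k u = down n (Nat.add k n) u.
Proof.
elim: k u => [|k IH] u /=; first by rewrite down_id.
rewrite IH; symmetry; apply: (@down_S n (Nat.add k n)); lia.
Qed.

End Down.

End MP2.
Import MP2.

Module MP3.
Import GRing.Theory Num.Theory.
Local Open Scope ring_scope.

Definition seg (X : Type) (x : biseq X) (a : int) (m : nat) : seq X :=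
  [seq x (a + Posz i) | i <- iota 0 m].

Lemma size_seg (X : Type) (x : biseq X) a m : size (seg x a m) = m.
Proof. by rewrite size_map size_iota. Qed.

Lemma seg_cat (X : Type) (x : biseq X) a m1 m2 :
  seg x a (m1 + m2) = seg x a m1 ++ seg x (a + Posz m1) m2.
Proof.
rewrite /seg iotaD map_cat add0n.
have -> : iota m1 m2 = map (addn m1) (iota 0 m2) by rewrite -iotaDl addn0.
rewrite -map_comp; congr (_ ++ _).
by apply: eq_map => i /=; rewrite PoszD addrA.
Qed.

Lemma seg_cons (X : Type) (x : biseq X) a m : seg x a m.+1 = x a :: seg x (a + 1) m.
Proof. by rewrite -add1n seg_cat /seg /= addr0. Qed.

Lemma nth_seg (X : Type) (x : biseq X) a m d i : (i < m)%N -> nth d (seg x a m) i = x (a + Posz i).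
Proof. by move=> h; rewrite /seg (nth_map 0%N) ?size_iota // nth_iota. Qed.

Lemma seg_ext (X : Type) (x x' : biseq X) a m :
  (forall i : nat, (i < m)%N -> x (a + Posz i) = x' (a + Posz i)) -> seg x a m = seg x' a m.
Proof.
move=> h; apply/eq_in_map => i; rewrite mem_iota add0n => /andP [_ hi]; exact: h.
Qed.

Lemma window_seg (X : Type) (x : biseq X) l : window x l = seg x (- Posz l) (2 * l).+1.
Proof. by apply: eq_map => i; rewrite addrC. Qed.

Lemma seg_infix (X : eqType) (x : biseq X) a m b m' :
  b <= a -> a + Posz m <= b + Posz m' -> infix (seg x a m) (seg x b m').
Proof.
move=> h1 h2.
have [d ed] : exists d : nat, a = b + Posz d by exists `|a - b|%N; lia.
have [e ee] : exists e : nat, m' = (d + m + e)%N by exists (m' - (d + m))%N; lia.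
rewrite ee !seg_cat -ed; apply/infixP; exists (seg x b d), (seg x (a + Posz m) e).
by rewrite catA ed PoszD addrA.
Qed.

Section Pos.
Variables (X Y : Type) (s : X -> seq Y) (x : biseq X).

Lemma pos_succ k : pos s x (k + 1) = pos s x k + (size (s (x k)))%:Z.
Proof.
case: k => m.
  have -> : Posz m + 1 = Posz m.+1 by rewrite -addn1.
  by rewrite /pos big_ord_recr /= PoszD.
case: m => [|m].
  have -> : Negz 0 + 1 = 0 by [].
  rewrite /pos big_ord_recr big_ord0 /=.
  have -> : (- Posz 1) = Negz 0 by [].
  by rewrite big_ord0 add0n addNr.
have -> : Negz m.+1 + 1 = Negz m by rewrite !NegzE; lia.
rewrite /pos [in RHS]big_ord_recr /= PoszD opprD.
have -> : (- Posz m.+2) = Negz m.+1 by [].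
lia.
Qed.

Lemma pos0 : pos s x 0 = 0.
Proof. by rewrite /pos /= big_ord0. Qed.

Lemma pos_seg a m : pos s x (a + Posz m) = pos s x a + (size (wimg s (seg x a m)))%:Z.
Proof.
elim: m a => [|m IH] a; first by rewrite addr0 /seg /= addr0.
rewrite seg_cons wimg_cons size_cat PoszD addrA -pos_succ -IH.
by congr pos; rewrite -addn1 PoszD; lia.
Qed.

Lemma onth_some (T : Type) (t : seq T) (d : T) i : (i < size t)%N -> onth t i = Some (nth d t i).
Proof. by move=> h; rewrite onthE (nth_map d). Qed.

Lemma img_seg1 z k : is_image s x z -> seg z (pos s x k) (size (s (x k))) = s (x k).
Proof.
move=> hz; apply: (@eq_from_nth _ (z 0)); first by rewrite size_seg.
move=> i; rewrite size_seg => hi; rewrite nth_seg //.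
by apply: hz; apply: onth_some.
Qed.

Lemma img_seg z a m : is_image s x z ->
  seg z (pos s x a) (size (wimg s (seg x a m))) = wimg s (seg x a m).
Proof.
move=> hz; elim: m a => [|m IH] a; first by rewrite /seg /= wimg_nil.
rewrite seg_cons wimg_cons size_cat seg_cat img_seg1 //; congr (_ ++ _).
by rewrite -pos_succ IH.
Qed.

Lemma pos_local (x' : biseq X) k : (forall i, (absz i <= absz k)%N -> x i = x' i) ->
  pos s x k = pos s x' k.
Proof.
case: k => m h /=; congr (_ _).
  by apply: eq_bigr => i _; rewrite h //=; apply: ltnW.
congr Posz; apply: eq_bigr => i _; rewrite h //=.
Qed.

Unset Implicit Arguments.
Hypothesis ne : nonerasing s.
Set Implicit Arguments.

Lemma pos_ge a m : pos s x a + Posz m <= pos s x (a + Posz m).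
Proof.
rewrite pos_seg lerD2l lez_nat.
by have := size_wimg_ge (seg x a m) ne; rewrite size_seg.
Qed.

Lemma pos_succ_gt k : pos s x k < pos s x (k + 1).
Proof.
rewrite pos_succ -subr_gt0 addrAC subrr add0r ltz_nat.
by case: (s (x k)) (ne (x k)).
Qed.

Lemma pos_mono a b : a <= b -> pos s x a <= pos s x b.
Proof.
move=> h; have -> : b = a + Posz `|b - a|%N by lia.
have := pos_ge a `|b - a|%N; lia.
Qed.

Lemma pos_unique k k' j j' : (j < size (s (x k)))%N -> (j' < size (s (x k')))%N ->
  pos s x k + Posz j = pos s x k' + Posz j' -> k = k'.
Proof.
move=> hj hj' e.
case: (ltrgtP k k') => // h.
  have h1 : k + 1 <= k' by lia.
  have := pos_mono h1; rewrite pos_succ; lia.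
have h1 : k' + 1 <= k by lia.
have := pos_mono h1; rewrite pos_succ; lia.
Qed.

Lemma pos_cover i : exists k (j : nat), (j < size (s (x k)))%N /\ pos s x k + Posz j = i.
Proof.
have h0 : pos s x (- Posz `|i|%N) <= i.
  have := pos_ge (- Posz `|i|%N) `|i|%N; rewrite addNr pos0; lia.
suff : forall (d : nat) b, pos s x b <= i -> (`|i - pos s x b| <= d)%N ->
  exists k (j : nat), (j < size (s (x k)))%N /\ pos s x k + Posz j = i.
  by move=> H; exact: (H _ _ h0 (leqnn _)).
elim=> [|d IH] b hb hd.
  exists b, 0%N; split; first by case: (s (x b)) (ne (x b)).
  lia.
case: (ltrP i (pos s x (b + 1))) => h.
  exists b, `|i - pos s x b|%N; split; last by lia.
  move: h; rewrite pos_succ; lia.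
apply: (IH (b + 1)) => //.
have := pos_succ_gt b; lia.
Qed.

Lemma image_exists : exists z, is_image s x z.
Proof.
have hc : forall i, exists c, exists k (j : nat), onth (s (x k)) j = Some c /\ pos s x k + Posz j = i.
  move=> i; have [k [j [hj e]]] := pos_cover i.
  case E: (s (x k)) => [|c0 t]; first by rewrite E in hj.
  by exists (nth c0 (s (x k)) j), k, j; rewrite (onth_some c0 hj).
exists (fun i => proj1_sig (constructive_indefinite_description _ (hc i))).
move=> k j c hkj.
case: (constructive_indefinite_description _ _) => c' [k' [j' [h1 h2]]] /=.
have hj : (j < size (s (x k)))%N by rewrite -onthTE hkj.
have hj' : (j' < size (s (x k')))%N by rewrite -onthTE h1.
have ek := pos_unique hj' hj h2; subst k'.
have ej : j' = j by move: h2; lia.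
by subst j'; move: h1; rewrite hkj => -[].
Qed.
End Pos.

End MP3.
Import MP3.

Module MP4.

Lemma fin_bound (T : finType) (P : T -> nat -> Prop) :
  (forall t, exists n, P t n) -> exists N, forall t, exists n, n <= N /\ P t n.
Proof.
move=> h.
suff : forall s : seq T, exists N, forall t, t \in s -> exists n, n <= N /\ P t n.
  by case/(_ (enum T)) => N hN; exists N => t; apply: hN; rewrite mem_enum.
elim=> [|a s [N hN]]; first by exists 0.
have [na hna] := h a.
exists (maxn N na) => t; rewrite inE => /orP [/eqP ->|ht].
  by exists na; split => //; apply: leq_maxr.
have [n [hn hp]] := hN t ht; exists n; split => //.
by apply: leq_trans hn (leq_maxl _ _).
Qed.

Definition enum_int (j : nat) : int := if odd j then Negz j./2 else Posz j./2.
Definition einv (i : int) : nat := match i with Posz m => m.*2 | Negz m => m.*2.+1 end.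

Lemma enum_einv i : enum_int (einv i) = i.
Proof.
case: i => m; rewrite /enum_int /einv.
  by rewrite odd_double doubleK.
rewrite /= odd_double /=; congr Negz.
by rewrite uphalf_double.
Qed.

Lemma einv_bound i r : (absz i <= r)%N -> einv i < (r.*2).+2.
Proof. case: i => m /=; lia. Qed.

Section Compact.
Variable T : finType.
Variable P : nat -> (int -> T) -> Prop.
Hypothesis hP : forall L, exists l, L <= l /\ exists h, P l h.

Lemma compact : exists g : int -> T, forall (r L : nat), exists l, L <= l /\
  exists h, P l h /\ forall i, (absz i <= r)%N -> h i = g i.
Proof.
have [l0 [_ [h0 Ph0]]] := hP 0.
pose f l := epsilon (inhabits h0) (P l).
pose Q l := exists h, P l h.
have Qf : forall l, Q l -> P l (f l) by move=> l; apply: epsilon_spec.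
pose t0 := h0 0%R.
pose F l j := f l (enum_int j).
pose Good (s : seq T) := forall L, exists l, L <= l /\ Q l /\
   forall j, j < size s -> F l j = nth t0 s j.
have pig : forall s, Good s -> exists t, Good (rcons s t).
  move=> s gs; apply: NNPP => hn.
  have h1 : forall t, exists L, forall l, L <= l -> ~ (Q l /\
      forall j, j < size (rcons s t) -> F l j = nth t0 (rcons s t) j).
    move=> t; apply: NNPP => h2; apply: hn; exists t => L.
    apply: NNPP => h3; apply: h2; exists L => l hl h4; apply: h3.
    by exists l.
  have [N hN] := fin_bound h1.
  have [l [hl [Ql hagree]]] := gs N.
  have [n [hn1 hp]] := hN (F l (size s)).
  apply: (hp l (leq_trans hn1 hl)); split => // j; rewrite size_rcons ltnS leq_eqVlt.
  case/orP => [/eqP ->|hj]; first by rewrite nth_rcons ltnn eqxx.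
  by rewrite nth_rcons hj hagree.
pose nxt s := epsilon (inhabits t0) (fun t => Good (rcons s t)).
pose build := fix build (J : nat) : seq T :=
  if J is J'.+1 then rcons (build J') (nxt (build J')) else [::].
have size_build : forall J, size (build J) = J.
  by elim=> [|J IH] //=; rewrite size_rcons IH.
have good_build : forall J, Good (build J).
  elim=> [|J IH].
    move=> L; have [l [hl [h Ph]]] := hP L.
    by exists l; split => //; split => //; exists h.
  exact: (epsilon_spec (inhabits t0) (fun t => Good (rcons (build J) t)) (pig _ IH)).
pose g' j := nth t0 (build j.+1) j.
have nth_build : forall J j, j < J -> nth t0 (build J) j = g' j.
  elim=> [|J IH] j //= hj.
  rewrite nth_rcons size_build.
  case: (ltnP j J) => hlt; first by rewrite IH.
  have -> : j = J by lia.
  by rewrite eqxx /g' /= nth_rcons size_build ltnn eqxx.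
exists (fun i => g' (einv i)) => r L.
have [l [hl [Ql hagree]]] := good_build (r.*2).+2 L.
exists l; split => //; exists (f l); split; first exact: Qf.
move=> i hi; rewrite -{1}(enum_einv i).
have hb := einv_bound hi.
by rewrite -[f l _]/(F l _) hagree ?size_build // nth_build.
Qed.
End Compact.

End MP4.
Import MP4.

Module MP5.

Definition Lang (C : nat -> finType) (rho : directive C) (m : nat) (w : seq (C m)) : Prop :=
  exists N (a : C N), m < N /\ infix w (down _ rho m N [:: a]).
Arguments Lang {C} rho m w.

Lemma level_iff (C : nat -> finType) (rho : directive C) m x :
  level rho m x <-> forall l, Lang rho m (window x l).
Proof.
split => h l.
  have [k [a ha]] := h l; exists (Nat.add k.+1 m), a; split; first by lia.
  by rewrite -sub_down.
have [N [a [hN ha]]] := h l.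
have [k ek] : exists k, N = Nat.add k.+1 m by exists (N - m.+1); lia.
subst N; exists k, a; by rewrite sub_down.
Qed.

Lemma large_level (C : nat -> finType) (rho : directive C) m x :
  (forall l, Lang rho m (window x l)) -> forall l K, exists N (a : C N),
    [/\ K <= N, m < N & infix (window x l) (down _ rho m N [:: a])].
Proof.
move=> h l K.
have [Bd hBd] : exists Bd, forall N, N < K -> forall a : C N, size (down _ rho m N [:: a]) <= Bd.
  elim: K {h} => [|K [Bd hBd]]; first by exists 0.
  exists (maxn Bd (\max_(a : C K) size (down _ rho m K [:: a]))) => N hN a.
  case: (ltnP N K) => hlt.
    by apply: leq_trans (hBd N hlt a) (leq_maxl _ _).
  have e : N = K by lia.
  subst N; apply: leq_trans _ (leq_maxr _ _).
  exact: (@leq_bigmax _ (fun a : C K => size (down _ rho m K [:: a])) a).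
have [N [a [hN ha]]] := h (maxn l Bd).
exists N, a; split => //.
- rewrite leqNgt; apply/negP => hlt.
  have := size_infix ha; have := hBd N hlt a.
  rewrite /window size_map size_iota; move: (size (down _ _ _ _ _)) => sz; lia.
- apply: infix_trans ha; rewrite !window_seg; apply: seg_infix; lia.
Qed.

Lemma ohead_cons (T : Type) (t : seq T) u : ohead t = Some u -> exists r, t = u :: r.
Proof. by case: t => //= a r [->]; exists r. Qed.

Lemma ohead_rcons (T : Type) (t : seq T) v : ohead (rev t) = Some v -> exists r, t = rcons r v.
Proof. by case/lastP: t => [|r a] //; rewrite rev_rcons /= => -[->]; exists r. Qed.

End MP5.
Import MP5.

Module MP6.

Section Tau.
Variable B : nat -> finType.
Unset Implicit Arguments.
Variable tau : directive B.
Hypothesis Hgrow : forall M, exists N0, forall N, N0 <= N -> forall b : B N,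
  M <= size (down B tau 0 N [:: b]).
Hypothesis Hprop : proper_directive tau.
Set Implicit Arguments.

Lemma growN m M : exists K, forall N, K <= N -> forall b : B N, M <= size (down B tau m N [:: b]).
Proof.
pose Cm := (\max_(c : B m) size (down B tau 0 m [:: c])).+1.
have [N0 hN0] := Hgrow (M * Cm).
exists (maxn N0 m) => N hN b.
have h1 := hN0 N ltac:(lia) b.
rewrite -(@down_comp _ tau 0 m N) // in h1; last by lia.
rewrite down_flat // in h1.
have h2 := @size_wimg_le _ _ (fun a : B m => down B tau 0 m [:: a]) Cm (down B tau m N [:: b]).
have h3 : forall a : B m, size (down B tau 0 m [:: a]) <= Cm.
  move=> a; apply: ltnW; rewrite ltnS.
  exact: (@leq_bigmax _ (fun c : B m => size (down B tau 0 m [:: c])) a).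
have := leq_trans h1 (h2 h3).
rewrite mulnC leq_pmul2l //.
Qed.

Lemma pair_lemma N' (u v : B N') :
  (forall a, ohead (tau N' a) = Some u /\ ohead (rev (tau N' a)) = Some v) ->
  exists N'' (c : B N''), N' < N'' /\ infix [:: v; u] (down B tau N' N'' [:: c]).
Proof.
move=> hp.
have [K hK] := growN N'.+1 2.
pose N'' := maxn K N'.+1.
have [c _] : exists c : B N'', True by have [c [_ _]] := Hprop N''; exists c.
exists N'', c; split; first by lia.
rewrite -(@down_comp _ tau N' N'.+1 N'') //; last by lia.
rewrite down_S1.
have := hK N'' ltac:(lia) c.
case: (down B tau N'.+1 N'' [:: c]) => [|e1 [|e2 r]] //= _.
rewrite !wimg_cons.
have [r1 e1r] := ohead_rcons (proj2 (hp e1)).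
have [r2 e2r] := ohead_cons (proj1 (hp e2)).
rewrite e1r e2r; apply/infixP; exists r1, (r2 ++ wimg (tau N') r).
by rewrite -cats1 -!catA.
Qed.

Lemma straddle n M : exists K0, forall N, K0 <= N -> forall (v : seq (B N)) w,
  size w <= M -> infix w (down B tau n N v) -> Lang tau n w.
Proof.
have [K1 hK1] := growN n M.
exists (maxn K1 n).+1 => N hN v w hw hinf.
case: N hN v hinf => [|N'] hN v hinf; first by lia.
have hnN : n <= N' by lia.
have [u0 [v0 hp]] := Hprop N'.
rewrite down_S // down_wimg // in hinf.
pose Pu := down B tau n N' [:: u0]; pose Pv := down B tau n N' [:: v0].
have hQ : forall Q, Q \in map (fun b => down B tau n N' (tau N' b)) v -> prefix Pu Q /\ suffix Pv Q.
  move=> Q /mapP [b _ ->]; split.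
    have [r er] := ohead_cons (proj1 (hp b)); rewrite er -cat1s down_cat //.
    exact: prefix_prefix.
  have [r er] := ohead_rcons (proj2 (hp b)); rewrite er -cats1 down_cat //.
  exact: suffix_suffix.
have hu : size w <= size Pu by apply: leq_trans hw (hK1 N' ltac:(lia) u0).
have hv : size w <= size Pv by apply: leq_trans hw (hK1 N' ltac:(lia) v0).
case: (infix_blocks hinf hQ hu hv) => [[Q /mapP [b _ ->] hwQ]|hwp].
  exists N'.+1, b; split; first by lia.
  by rewrite down_S // wimg1.
have [N'' [c [hN'' hc]]] := pair_lemma hp.
exists N'', c; split; first by lia.
rewrite -(@down_comp _ tau n N' N'') //; last by lia.
apply: infix_trans hwp _.
have -> : Pv ++ Pu = down B tau n N' [:: v0; u0] by rewrite -down_cat.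
exact: down_infix.
Qed.
End Tau.

End MP6.
Import MP6.

Module MP7.
Import GRing.Theory Num.Theory.

Lemma find_block (X Y : Type) (f : X -> seq Y) (u : seq X) q : q < size (wimg f u) ->
  exists c, [/\ c < size u, size (wimg f (take c u)) <= q & q < size (wimg f (take c.+1 u))].
Proof.
elim: u q => [|a u IH] q //=.
rewrite wimg_cons size_cat => hq.
case: (ltnP q (size (f a))) => h.
  by exists 0; split => //; rewrite /= take0 ?wimg1 //; lia.
have [c [h1 h2 h3]] := IH (q - size (f a)) ltac:(lia).
exists c.+1; split => //; rewrite /= wimg_cons size_cat; lia.
Qed.

Section Main.
Variables A B : nat -> finType.
Unset Implicit Arguments.
Variables (sigma : directive A) (tau : directive B) (n p : nat).
Variables (psi : A p -> seq (B n)) (Phi : forall N, A N -> seq (B N)).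
Hypothesis Hpsi : nonerasing psi.
Hypothesis Honto : forall N, p <= N -> letter_onto (Phi N).
Hypothesis H1 : forall N (u : seq (A N)), p <= N ->
  wimg psi (down A sigma p N u) = down B tau n N (wimg (Phi N) u).
Hypothesis Hgrow : forall M, exists N0, forall N, N0 <= N -> forall b : B N,
  M <= size (down B tau 0 N [:: b]).
Hypothesis Hprop : proper_directive tau.
Set Implicit Arguments.

Lemma sup_dir y : shift_union_image psi (level sigma p) y -> level tau n y.
Proof.
case=> k [x [z [hx [hz hy]]]].
apply/level_iff => l.
have [K0 hK0] := straddle Hgrow Hprop n (2 * l).+1.
pose L := (absz k + l)%N.
have [N [a [hKN hpN hinf]]] := large_level (proj1 (level_iff _ _) hx) L (maxn K0 p).
apply: (hK0 N ltac:(lia) (wimg (Phi N) [:: a])).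
  by rewrite /window size_map size_iota.
rewrite -H1; last by lia.
apply: infix_trans (infix_wimg psi hinf).
rewrite !window_seg -(img_seg _ _ hz).
have -> : seg y (- Posz l) (2 * l).+1 = seg z (- Posz l + k) (2 * l).+1.
  by rewrite /seg; apply: eq_map => i; rewrite hy; congr z; lia.
apply: seg_infix.
  have := pos_ge x Hpsi (- Posz L)%R L; rewrite addNr pos0; lia.
rewrite -pos_seg.
have := pos_ge x Hpsi 0%R (L.+1); rewrite pos0 add0r.
have -> : (- Posz L + Posz (2 * L).+1 = Posz L.+1)%R by lia.
lia.
Qed.


Lemma sub_dir y : level tau n y -> shift_union_image psi (level sigma p) y.
Proof.
move/level_iff => hy.
have [K hK] : exists K, forall a : A p, size (psi a) <= K.
  by exists (\max_(a : A p) size (psi a)) => a; exact: (@leq_bigmax _ (fun a => size (psi a)) a).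
have stepA : forall l, exists N (a : A N), p < N /\ infix (window y l) (wimg psi (down A sigma p N [:: a])).
  move=> l; have [N [b [hpN hnN hinf]]] := large_level hy l p.+1.
  have [a ha] := Honto N (ltnW hpN) b.
  exists N, a; split => //.
  rewrite H1; last by lia.
  rewrite wimg1; apply: infix_trans hinf _; apply: down_infix; first by lia.
  by rewrite infix1s.
pose T := (A p * B n * 'I_K.+1)%type.
pose P l (h : int -> T) := exists (xl : biseq (A p)) (zl : biseq (B n)) (kl : 'I_K.+1),
   [/\ forall i, h i = (xl i, zl i, kl), is_image psi xl zl,
       forall i : int, (absz i <= l)%N -> y i = zl (i + Posz kl)%R
     & forall r, K * r.+1 <= l -> Lang sigma p (window xl r)].
have stepB : forall l, exists h, P l h.
  move=> l; have [N [a [hpN hinf]]] := stepA l.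
  have [U eU0] : exists U, U = down A sigma p N [:: a] by eexists.
  rewrite -eU0 in hinf.
  case/infixP: hinf => Pre [Suf eU].
  pose d := size Pre; pose q := (d + l)%N.
  have hsU : size (wimg psi U) = (d + (2 * l).+1 + size Suf)%N.
    by rewrite eU !size_cat /window size_map size_iota addnA.
  have [c [hc hc1 hc2]] := @find_block _ _ psi U q ltac:(lia).
  have [a0 _] : exists a0 : A p, True by case: U {eU0 eU hsU hc1 hc2} hc => // a0 *; exists a0.
  pose xl (j : int) := nth a0 U (absz (j + Posz c)%R).
  have [zl hzl] := image_exists xl Hpsi.
  pose s1 := size (wimg psi (take c U)).
  pose s2 := size (wimg psi (take c.+1 U)).
  have hs2 : s2 <= s1 + K.
    by rewrite /s2 /s1 (take_nth a0 hc) -cats1 wimg_cat wimg1 size_cat leq_add2l.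
  have hk : q - s1 < K.+1 by rewrite /s2 in hs2; lia.
  exists (fun i => (xl i, zl i, Ordinal hk)), xl, zl, (Ordinal hk); split => //.
  - have hsegU : seg xl (- Posz c)%R (size U) = U.
      apply: (@eq_from_nth _ a0); first by rewrite size_seg.
      move=> i; rewrite size_seg => hi; rewrite nth_seg // /xl.
      by have -> : (- Posz c + Posz i + Posz c = Posz i)%R by lia.
    have hsegc : seg xl (- Posz c)%R c = take c U.
      apply: (@eq_from_nth _ a0); first by rewrite size_seg size_takel // ltnW.
      move=> i; rewrite size_seg => hi; rewrite nth_seg // nth_take // /xl.
      by have -> : (- Posz c + Posz i + Posz c = Posz i)%R by lia.
    have hpos : pos psi xl (- Posz c)%R = (- Posz s1)%R.
      have := pos_seg psi xl (- Posz c)%R c; rewrite addNr pos0 hsegc -/s1; lia.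
    have himg := img_seg (- Posz c)%R (size U) hzl; rewrite hsegU hpos in himg.
    move=> i hi /=.
    pose t := absz (Posz q + i)%R.
    have et : Posz t = (Posz q + i)%R by rewrite /t; lia.
    have ht : t < size (wimg psi U) by lia.
    have -> : (i + Posz (q - s1))%R = (- Posz s1 + Posz t)%R by rewrite et; lia.
    rewrite -(@nth_seg _ zl _ _ (zl 0%R) _ ht) himg eU nth_cat.
    have hdt : ~~ (t < size Pre) by rewrite -/d; lia.
    rewrite (negbTE hdt) nth_cat /window size_map size_iota.
    have hdt' : t - size Pre < (2 * l).+1 by rewrite -/d; lia.
    rewrite hdt' (nth_map 0) ?size_iota // nth_iota //; congr y; rewrite -/d; lia.
  - move=> r hr; exists N, a; split => //; rewrite -eU0.
    have hsegU : seg xl (- Posz c)%R (size U) = U.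
      apply: (@eq_from_nth _ a0); first by rewrite size_seg.
      move=> i; rewrite size_seg => hi; rewrite nth_seg // /xl.
      by have -> : (- Posz c + Posz i + Posz c = Posz i)%R by lia.
    have hs3 : s2 <= K * c.+1.
      by rewrite /s2; apply: leq_trans (size_wimg_le _ _) _; [exact: hK|rewrite size_takel].
    pose D := size (wimg psi (drop c.+1 U)).
    have hD : D <= K * (size U - c.+1).
      by rewrite /D; apply: leq_trans (size_wimg_le _ _) _; [exact: hK|rewrite size_drop].
    have hsum : s2 + D = size (wimg psi U) by rewrite /s2 /D -size_cat -wimg_cat cat_take_drop.
    have hrc : r <= c.
      rewrite leqNgt; apply/negP => hcr.
      have : K * c.+1 <= K * r.+1 by rewrite leq_mul2l; apply/orP; right; lia.
      lia.
    have eK : K * (size U - c) = K + K * (size U - c.+1).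
      by rewrite -mulnS; congr (_ * _); lia.
    have hrU : r + c < size U.
      rewrite ltnNge; apply/negP => hcr.
      have : K * (size U - c) <= K * r.+1 by rewrite leq_mul2l; apply/orP; right; lia.
      lia.
    rewrite window_seg -hsegU; apply: seg_infix; lia.
have [g hg] := compact (fun L => ex_intro _ L (conj (leqnn L) (stepB L))).
pose X i := (g i).1.1; pose Z i := (g i).1.2.
exists (Posz (g 0%R).2), X, Z; split; [|split].
- apply/level_iff => r.
  have [l [hl [h [[xl [zl [kl [hh _ _ hL]]]] hag]]]] := hg r (K * r.+1).
  have -> : window X r = window xl r.
    apply/eq_in_map => i; rewrite mem_iota add0n => /andP [_ hi].
    by rewrite /X -hag ?hh //; lia.
  exact: hL.
- move=> k' j c hkj.
  pose R := maxn (absz k') (absz (pos psi X k' + Posz j)%R).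
  have [l [_ [h [[xl [zl [kl [hh hzl _ _]]]] hag]]]] := hg R 0.
  have hX : forall i, (absz i <= R)%N -> X i = xl i by move=> i hi; rewrite /X -hag ?hh.
  have hZ : forall i, (absz i <= R)%N -> Z i = zl i by move=> i hi; rewrite /Z -hag ?hh.
  have ep : pos psi X k' = pos psi xl k'.
    by apply: pos_local => i hi; apply: hX; lia.
  rewrite hZ; last by lia.
  rewrite ep; apply: hzl; rewrite -hX //; lia.
- move=> i.
  pose R := absz (i + Posz (g 0%R).2)%R.
  have [l [hl [h [[xl [zl [kl [hh _ hyl _]]]] hag]]]] := hg R (absz i).
  have ek : kl = (g 0%R).2 by rewrite -hag // hh.
  have := hag (i + Posz (g 0%R).2)%R (leqnn _); rewrite hh /Z => <-.
  by rewrite hyl // ek.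
Qed.

End Main.

End MP7.
Import MP7.


Definition PhiN (A B : nat -> finType) (phi : forall m, A m.+1 -> seq (B m.+1)) :
  forall N, A N -> seq (B N) :=
  fun N => match N as N0 return A N0 -> seq (B N0) with
           | 0 => fun _ => [::]
           | m.+1 => phi m end.
Arguments PhiN {A B} phi N _.

Lemma H1_gen (A B : nat -> finType) (sigma : directive A) (tau : directive B)
  (phi : forall m, A m.+1 -> seq (B m.+1)) :
  (forall m (a : A m.+2), wimg (phi m) (sigma m.+1 a) = wimg (tau m.+1) (phi m.+1 a)) ->
  forall m N (u : seq (A N)), m.+1 <= N ->
  wimg (phi m) (down A sigma m.+1 N u) = down B tau m.+1 N (wimg (PhiN phi N) u).
Proof.
move=> hf m; elim=> [|N IH] u hN; first by [].
case: (eqVneq m N) => [e|ne].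
  by subst m; rewrite !down_id.
have hmN : m.+1 <= N by lia.
rewrite !down_S // IH // !wimg_comp; congr down; apply: wimg_ext => a.
case: N a {IH hN ne hmN u} (hmN) => [|N] a h //.
Qed.

Lemma grow_conv (B : nat -> finType) (tau : directive B) :
  everywhere_growing tau -> forall M, exists N0, forall N, N0 <= N -> forall b : B N,
  M <= size (down B tau 0 N [:: b]).
Proof.
move=> hg M; have [N0 hN0] := hg M; exists N0 => N hN.
have := hN0 N hN.
have e : Nat.add N 0 = N by elim: N {hN}=> //= N ->.
move=> H.
have H' : forall a : B (Nat.add N 0), M <= size (down B tau 0 (Nat.add N 0) [:: a]).
  by move=> a; rewrite -sub_down; exact: H.
by rewrite e in H'.
Qed.

Theorem lemma4p3 (A B : nat -> finType) (sigma : directive A) (tau : directive B)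
  (phi0 : A 1 -> seq (B 0)) (phi : forall m, A m.+1 -> seq (B m.+1)) :
  morphisms_nonerasing sigma -> morphisms_nonerasing tau ->
  everywhere_growing sigma -> proper_directive sigma ->
  everywhere_growing tau -> proper_directive tau ->
  is_factor sigma tau phi0 phi -> letter_onto_factor phi0 phi ->
  (forall y : biseq (B 0),
     level tau 0 y <-> shift_union_image phi0 (level sigma 1) y) /\
  (forall (m : nat) (y : biseq (B m.+1)),
     level tau m.+1 y <-> shift_union_image (phi m) (level sigma m.+1) y).
Proof.
move=> hs ht gs ps gt pt [ne0 [nem [f0 fm]]] [o0 om].
have Hg := grow_conv gt.
have H1m := H1_gen fm.
have Honto : forall q N, q.+1 <= N -> letter_onto (PhiN phi N).
  by move=> q [|N] // _; exact: om.
have H10 : forall N (u : seq (A N)), 1 <= N ->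
    wimg phi0 (down A sigma 1 N u) = down B tau 0 N (wimg (PhiN phi N) u).
  move=> N u hN.
  have -> : wimg phi0 (down A sigma 1 N u) = wimg (tau 0) (wimg (phi 0) (down A sigma 1 N u)).
    by rewrite wimg_comp; apply: wimg_ext => a; rewrite f0.
  by rewrite H1m // -down_S1 down_comp.
split.
- move=> y; split.
  + exact: (@sub_dir A B sigma tau 0 1 phi0 (PhiN phi) ne0 (Honto 0) H10 y).
  + move=> hy; exact: (@sup_dir A B sigma tau 0 1 phi0 (PhiN phi) ne0 H10 Hg pt y hy).
- move=> m y; split.
  + exact: (@sub_dir A B sigma tau m.+1 m.+1 (phi m) (PhiN phi) (nem m) (Honto m) (H1m m) y).
  + move=> hy; exact: (@sup_dir A B sigma tau m.+1 m.+1 (phi m) (PhiN phi) (nem m) (H1m m) Hg pt y hy).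
Qed.
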